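(* With the notation and hypotheses on $A_\kappa,B_\kappa,W_P,W_Q,D_P,D_Q,\lambda_2$ and the function $F$ as in the context, let $V'\in\mathbb{R}^{n\times k}$ have strictly positive entries, and for $V\in\mathbb{R}^{n\times k}$ with strictly positive entries define $$\begin{aligned}J(V,V')=\sum_{\kappa=1}^{2}\Big[&-2\sum_{i,s}(B_\kappa^+)_{is}v'_{is}\Big(1+\log\frac{v_{is}}{v'_{is}}\Big)+\sum_{i,s}(B_\kappa^-)_{is}\frac{v_{is}^2+v_{is}'^2}{v'_{is}}+\sum_{i,s}\frac{(V'A_\kappa^+)_{is}v_{is}^2}{v'_{is}}\\&-\sum_{i,s,l}(A_\kappa^-)_{sl}v'_{is}v'_{il}\Big(1+\log\frac{v_{is}v_{il}}{v'_{is}v'_{il}}\Big)\Big]\\ +\lambda_2\sum_{G\in\{P,Q\}}\Big[&\sum_{i,s}\frac{(D_GV')_{is}v_{is}^2}{v'_{is}}-\sum_{j,l,s}(W_G)_{jl}v'_{js}v'_{ls}\Big(1+\log\frac{v_{js}v_{ls}}{v'_{js}v'_{ls}}\Big)\Big].\end{aligned}$$ Then (i) $J(V,V')\ge F(V)$ and $J(V,V)=F(V)$ for all such $V,V'$, i.e. $J$ is an auxiliary function for $F$; (ii) $J(\cdot,V')$ is convex on the open positive orthant; and (iii) if the matrices $\Delta_1=B_1^++B_2^++V'(A_1^-+A_2^-)+\lambda_2(W_P+W_Q)V'$ and $\Delta_2=B_1^-+B_2^-+V'(A_1^++A_2^+)+\lambda_2(D_P+D_Q)V'$ have strictly positive entries,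 then the global minimizer of $J(\cdot,V')$ over the positive orthant is given by $v_{ij}=v'_{ij}\sqrt{(\Delta_1)_{ij}/(\Delta_2)_{ij}}$.
   Context: Setting: $n,k\ge1$, $\lambda_2\ge0$; $A_1,A_2\in\mathbb{R}^{k\times k}$ symmetric; $B_1,B_2\in\mathbb{R}^{n\times k}$; $W_P,W_Q\in\mathbb{R}^{n\times n}$ symmetric with nonnegative entries; $D_P,D_Q$ diagonal with $(D_G)_{ii}=\sum_j(W_G)_{ij}$. For a real matrix $M$, $M^+_{ij}=(|M_{ij}|+M_{ij})/2$ and $M^-_{ij}=(|M_{ij}|-M_{ij})/2$. For $V=[v_{ij}]\in\mathbb{R}^{n\times k}$, $F(V)=\mathrm{Tr}\big(-2V^TB_1^+ + 2V^TB_1^- + VA_1^+V^T - VA_1^-V^T - 2V^TB_2^+ + 2V^TB_2^- + VA_2^+V^T - VA_2^-V^T + \lambda_2 V^TD_PV - \lambda_2 V^TW_PV + \lambda_2 V^TD_QV - \lambda_2 V^TW_QV\big)$. *)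

(* Defs.v *)
From HB Require Import structures.
From mathcomp Require Import all_boot all_order all_algebra.
From mathcomp Require Import reals exp.
Set Implicit Arguments. Unset Strict Implicit. Unset Printing Implicit Defensive.
Import Order.TTheory GRing.Theory Num.Theory.
Local Open Scope ring_scope.

Section Defs.
Variable R : realType.

Definition pospart m n (M : 'M[R]_(m, n)) : 'M[R]_(m, n) :=
  \matrix_(i, j) ((`|M i j| + M i j) / 2).
Definition negpart m n (M : 'M[R]_(m, n)) : 'M[R]_(m, n) :=
  \matrix_(i, j) ((`|M i j| - M i j) / 2).

Definition degmx n (W : 'M[R]_n) : 'M[R]_n :=
  \matrix_(i, j) ((i == j)%:R * \sum_(l < n) W i l).

Definition symmx n (M : 'M[R]_n) : Prop := M^T = M.
Definition nonnegmx m n (M : 'M[R]_(m, n)) : Prop := forall i j, 0 <= M i j.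
Definition posmx m n (M : 'M[R]_(m, n)) : Prop := forall i j, 0 < M i j.

Definition Fobj n k (lam2 : R) (A1 A2 : 'M[R]_k) (B1 B2 : 'M[R]_(n, k))
  (WP WQ : 'M[R]_n) (V : 'M[R]_(n, k)) : R :=
  (* Tr of a sum with n x n and k x k summands, split by linearity *)
  - 2 * \tr (V^T *m pospart B1) + 2 * \tr (V^T *m negpart B1)
  + \tr (V *m pospart A1 *m V^T) - \tr (V *m negpart A1 *m V^T)
  - 2 * \tr (V^T *m pospart B2) + 2 * \tr (V^T *m negpart B2)
  + \tr (V *m pospart A2 *m V^T) - \tr (V *m negpart A2 *m V^T)
  + lam2 * \tr (V^T *m degmx WP *m V) - lam2 * \tr (V^T *m WP *m V)
  + lam2 * \tr (V^T *m degmx WQ *m V) - lam2 * \tr (V^T *m WQ *m V).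

Definition Jterm n k (A : 'M[R]_k) (B : 'M[R]_(n, k)) (V V' : 'M[R]_(n, k)) : R :=
  - 2 * (\sum_(i < n) \sum_(s < k)
          pospart B i s * V' i s * (1 + ln (V i s / V' i s)))
  + \sum_(i < n) \sum_(s < k) negpart B i s * ((V i s ^+ 2 + V' i s ^+ 2) / V' i s)
  + \sum_(i < n) \sum_(s < k) (V' *m pospart A) i s * V i s ^+ 2 / V' i s
  - \sum_(i < n) \sum_(s < k) \sum_(l < k)
      negpart A s l * V' i s * V' i l
        * (1 + ln ((V i s * V i l) / (V' i s * V' i l))).

Definition Jgraph n k (W : 'M[R]_n) (V V' : 'M[R]_(n, k)) : R :=
  \sum_(i < n) \sum_(s < k) (degmx W *m V') i s * V i s ^+ 2 / V' i s
  - \sum_(j < n) \sum_(l < n) \sum_(s < k)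
      W j l * V' j s * V' l s
        * (1 + ln ((V j s * V l s) / (V' j s * V' l s))).

Definition Jaux n k (lam2 : R) (A1 A2 : 'M[R]_k) (B1 B2 : 'M[R]_(n, k))
  (WP WQ : 'M[R]_n) (V V' : 'M[R]_(n, k)) : R :=
  Jterm A1 B1 V V' + Jterm A2 B2 V V'
  + lam2 * (Jgraph WP V V' + Jgraph WQ V V').

End Defs.

(* Main.v *)
Require Import Defs.
From HB Require Import structures.
From mathcomp Require Import all_boot all_order all_algebra.
From mathcomp Require Import reals exp.
From mathcomp Require Import ring lra.
Set Implicit Arguments. Unset Strict Implicit. Unset Printing Implicit Defensive.
Import Order.TTheory GRing.Theory Num.Theory.
Local Open Scope ring_scope.
Section H.
Variable R : realType.
Implicit Types x y t : R.
Lemma ln_le_sub1 x : 0 < x -> ln x <= x - 1.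
Proof.
move=> x0; have h : -1 < x - 1 by lra.
by have := le_ln1Dx h; rewrite addrCA subrr addr0.
Qed.
Lemma lnbound x y : 0 < x -> 0 < y -> y * (1 + ln (x / y)) <= x.
Proof.
move=> x0 y0; have h := ln_le_sub1 (divr_gt0 x0 y0).
apply: (le_trans (y := y * (1 + (x / y - 1)))).
  by apply: ler_wpM2l; [exact: ltW | rewrite lerD2l].
rewrite le_eqVlt; apply/orP; left; apply/eqP; field; exact: lt0r_neq0.
Qed.
Lemma ln_concave x y t : 0 < x -> 0 < y -> 0 <= t <= 1 ->
  t * ln x + (1 - t) * ln y <= ln (t * x + (1 - t) * y).
Proof.
move=> x0 y0 /andP[t0 t1].
have m0 : 0 < t * x + (1 - t) * y.
  case: (ltrP t 1) => ht.
    have : 0 < (1 - t) * y by apply: mulr_gt0 => //; lra.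
    have : 0 <= t * x by apply: mulr_ge0 => //; exact: ltW.
    lra.
  have -> : t = 1 by lra.
  by rewrite mul1r subrr mul0r addr0.
set m := t * x + (1 - t) * y in m0 *.
have hx := ln_le_sub1 (divr_gt0 x0 m0).
have hy := ln_le_sub1 (divr_gt0 y0 m0).
rewrite ln_div ?posrE // in hx; rewrite ln_div ?posrE // in hy.
have h1 : t * (ln x - ln m) <= t * (x / m - 1) by apply: ler_wpM2l.
have h2 : (1 - t) * (ln y - ln m) <= (1 - t) * (y / m - 1) by apply: ler_wpM2l; lra.
have e : t * (x / m - 1) + (1 - t) * (y / m - 1) = 0.
  rewrite /m; field; exact: lt0r_neq0.
lra.
Qed.
Lemma sq_convex x y t : 0 <= t <= 1 ->
  (t * x + (1 - t) * y) ^+ 2 <= t * x ^+ 2 + (1 - t) * y ^+ 2.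
Proof.
move=> /andP[t0 t1].
have h : 0 <= t * (1 - t) * (x - y) ^+ 2.
  by apply: mulr_ge0; [apply: mulr_ge0; lra | exact: sqr_ge0].
have e : t * x ^+ 2 + (1 - t) * y ^+ 2 - (t * x + (1 - t) * y) ^+ 2
   = t * (1 - t) * (x - y) ^+ 2 by ring.
lra.
Qed.
Lemma amgm (cl cs ul us : R) : 0 < cl -> 0 < cs ->
  ul * us <= (cl * us ^+ 2 / cs + cs * ul ^+ 2 / cl) / 2.
Proof.
move=> c1 c2.
have e : (cl * us ^+ 2 / cs + cs * ul ^+ 2 / cl) / 2 - ul * us
   = (cl * us - cs * ul) ^+ 2 / (2 * cl * cs).
  field; apply/andP; split; exact: lt0r_neq0.
have : 0 <= (cl * us - cs * ul) ^+ 2 / (2 * cl * cs).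
  apply: divr_ge0; first exact: sqr_ge0.
  apply: mulr_ge0; [apply: mulr_ge0|]; lra.
lra.
Qed.
Lemma entry_min (b c v : R) : 0 <= b -> 0 < c -> 0 < v ->
  b * (v - c) ^+ 2 <= b * (v ^+ 2 - c ^+ 2) - 2 * (b * c ^+ 2) * (ln v - ln c).
Proof.
move=> b0 c0 v0.
have h := ln_le_sub1 (divr_gt0 v0 c0); rewrite ln_div ?posrE // in h.
have h2 : 2 * (b * c ^+ 2) * (ln v - ln c) <= 2 * (b * c ^+ 2) * (v / c - 1).
  apply: ler_wpM2l => //; apply: mulr_ge0 => //; apply: mulr_ge0 => //; exact: sqr_ge0.
have e : b * (v ^+ 2 - c ^+ 2) - 2 * (b * c ^+ 2) * (v / c - 1) = b * (v - c) ^+ 2.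
  field; exact: lt0r_neq0.
lra.
Qed.
End H.
Section S.
Variable R : realType.
Lemma tr1 n k (V M : 'M[R]_(n, k)) :
  \tr (V^T *m M) = \sum_(i < n) \sum_(s < k) V i s * M i s.
Proof.
rewrite /mxtrace exchange_big /=; apply: eq_bigr => s _.
by rewrite mxE; apply: eq_bigr => i _; rewrite mxE.
Qed.
Lemma tr2 n k (V : 'M[R]_(n, k)) (A : 'M[R]_k) :
  \tr (V *m A *m V^T) = \sum_(i < n) \sum_(s < k) \sum_(l < k) V i l * A l s * V i s.
Proof.
rewrite /mxtrace; apply: eq_bigr => i _; rewrite mxE; apply: eq_bigr => s _.
by rewrite !mxE mulr_suml.
Qed.
Lemma tr3 n k (V : 'M[R]_(n, k)) (W : 'M[R]_n) :
  \tr (V^T *m W *m V) = \sum_(j < n) \sum_(l < n) \sum_(s < k) W j l * V j s * V l s.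
Proof.
rewrite -mulmxA tr1; apply: eq_bigr => j _.
rewrite exchange_big /=; apply: eq_bigr => s _.
rewrite mxE mulr_sumr; apply: eq_bigr => l _; ring.
Qed.
Lemma degmxE n k (W : 'M[R]_n) (V : 'M[R]_(n, k)) i s :
  (degmx W *m V) i s = (\sum_(l < n) W i l) * V i s.
Proof.
rewrite /degmx mxE (bigD1 i) //= big1 ?addr0; first by rewrite mxE eqxx mul1r.
by move=> j /negbTE ji; rewrite mxE eq_sym ji mul0r mul0r.
Qed.
Lemma tr4 n k (V : 'M[R]_(n, k)) (W : 'M[R]_n) :
  \tr (V^T *m degmx W *m V) = \sum_(i < n) \sum_(s < k) (\sum_(l < n) W i l) * V i s ^+ 2.
Proof.
rewrite -mulmxA tr1; apply: eq_bigr => i _; apply: eq_bigr => s _.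
rewrite degmxE; ring.
Qed.
Lemma symsum k (a : 'M[R]_k) (c L : 'I_k -> R) : a^T = a ->
  \sum_(s < k) \sum_(l < k) a s l * c s * c l * (L s + L l)
  = 2 * \sum_(s < k) c s * (\sum_(l < k) c l * a l s) * L s.
Proof.
move=> sym.
have aE x y : a x y = a y x by rewrite -{1}sym mxE.
transitivity (\sum_(s < k) \sum_(l < k) a s l * c s * c l * L s
            + \sum_(s < k) \sum_(l < k) a s l * c s * c l * L l).
  rewrite -big_split /=; apply: eq_bigr => s _; rewrite -big_split /=.
  by apply: eq_bigr => l _; ring.
rewrite [X in _ + X]exchange_big /=.
have -> : \sum_(l < k) \sum_(s < k) a s l * c s * c l * L l
         = \sum_(s < k) \sum_(l < k) a s l * c s * c l * L s.
  apply: eq_bigr => s _; apply: eq_bigr => l _; rewrite (aE l s); ring.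
rewrite mulr2n mulrDl mul1r; congr (_ + _);
  apply: eq_bigr => s _; rewrite mulr_sumr mulr_suml; apply: eq_bigr => l _;
  rewrite (aE l s); ring.
Qed.
End S.
Section M.
Variable R : realType.
Lemma pos_ge0 m p (M : 'M[R]_(m,p)) i j : 0 <= pospart M i j.
Proof. rewrite mxE; apply: divr_ge0; last lra; have := ler_norm (- M i j); rewrite normrN; lra. Qed.
Lemma neg_ge0 m p (M : 'M[R]_(m,p)) i j : 0 <= negpart M i j.
Proof. rewrite mxE; apply: divr_ge0; last lra; have := ler_norm (M i j); lra. Qed.
Lemma symE k (A : 'M[R]_k) i j : A^T = A -> A j i = A i j.
Proof. by move=> sym; rewrite -[in RHS]sym mxE. Qed.
Lemma pos_sym k (A : 'M[R]_k) : A^T = A -> (pospart A)^T = pospart A.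
Proof. by move=> sym; apply/matrixP => i j; rewrite !mxE (symE _ _ sym). Qed.
Lemma neg_sym k (A : 'M[R]_k) : A^T = A -> (negpart A)^T = negpart A.
Proof. by move=> sym; apply/matrixP => i j; rewrite !mxE (symE _ _ sym). Qed.

Lemma quad k (a : 'M[R]_k) (c u : 'I_k -> R) : a^T = a -> (forall x y, 0 <= a x y) ->
  (forall s, 0 < c s) ->
  \sum_(s < k) \sum_(l < k) u l * a l s * u s
  <= \sum_(s < k) (\sum_(l < k) c l * a l s) * u s ^+ 2 / c s.
Proof.
move=> sym a0 c0.
apply: (le_trans (y := \sum_(s < k) \sum_(l < k)
   a l s * ((c l * u s ^+ 2 / c s + c s * u l ^+ 2 / c l) / 2))).
  apply: ler_sum => s _; apply: ler_sum => l _.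
  rewrite (mulrC (u l)) -[a l s * u l * u s]mulrA; apply: ler_wpM2l => //; exact: amgm.
have e1 : \sum_(s < k) \sum_(l < k) a l s * ((c l * u s ^+ 2 / c s + c s * u l ^+ 2 / c l) / 2)
  = (\sum_(s < k) \sum_(l < k) a l s * c l * u s ^+ 2 / c s) / 2
  + (\sum_(s < k) \sum_(l < k) a l s * c s * u l ^+ 2 / c l) / 2.
  rewrite !mulr_suml -big_split /=; apply: eq_bigr => s _.
  rewrite !mulr_suml -big_split /=; apply: eq_bigr => l _; ring.
have e2 : \sum_(s < k) \sum_(l < k) a l s * c s * u l ^+ 2 / c l
  = \sum_(s < k) \sum_(l < k) a l s * c l * u s ^+ 2 / c s.
  rewrite exchange_big /=; apply: eq_bigr => s _; apply: eq_bigr => l _.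
  by rewrite (symE _ _ sym).
have e3 : \sum_(s < k) (\sum_(l < k) c l * a l s) * u s ^+ 2 / c s
  = \sum_(s < k) \sum_(l < k) a l s * c l * u s ^+ 2 / c s.
  apply: eq_bigr => s _; rewrite !mulr_suml; apply: eq_bigr => l _; ring.
rewrite e1 e2 e3; lra.
Qed.

Variables n k : nat.
Implicit Types V U : 'M[R]_(n, k).

Lemma Jterm_ge (A : 'M[R]_k) (B : 'M[R]_(n,k)) V V' : A^T = A -> posmx V -> posmx V' ->
  -2 * \tr (V^T *m pospart B) + 2 * \tr (V^T *m negpart B)
  + \tr (V *m pospart A *m V^T) - \tr (V *m negpart A *m V^T) <= Jterm A B V V'.
Proof.
move=> sym pV pV'; rewrite /Jterm !tr1 !tr2.
apply: lerB; [apply: lerD; [apply: lerD|] |].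
- rewrite !mulNr lerN2; apply: ler_wpM2l; first lra.
  apply: ler_sum => i _; apply: ler_sum => s _.
  rewrite [in X in _ <= X]mulrC -[pospart B i s * _ * _]mulrA; apply: ler_wpM2l; first exact: pos_ge0.
  exact: lnbound.
- rewrite mulr_sumr; apply: ler_sum => i _; rewrite mulr_sumr; apply: ler_sum => s _.
  have v0 := pV i s; have v'0 := pV' i s.
  have h : 2 * V i s <= (V i s ^+ 2 + V' i s ^+ 2) / V' i s.
    have e : (V i s ^+ 2 + V' i s ^+ 2) / V' i s - 2 * V i s
      = (V i s - V' i s) ^+ 2 / V' i s by field; exact: lt0r_neq0.
    have : 0 <= (V i s - V' i s) ^+ 2 / V' i s.
      by apply: divr_ge0; [exact: sqr_ge0 | exact: ltW].
    lra.
  rewrite [X in X <= _](_ : _ = negpart B i s * (2 * V i s)); last by ring.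
  apply: ler_wpM2l; first exact: neg_ge0.
  exact: h.
- apply: ler_sum => i _.
  apply: le_trans (@quad k (pospart A) (fun s => V' i s) (fun s => V i s) (pos_sym sym) (@pos_ge0 _ _ _) (fun s => pV' i s)) _.
  rewrite le_eqVlt; apply/orP; left; apply/eqP; apply: eq_bigr => s _.
  by rewrite [(V' *m _) i s]mxE.
- apply: ler_sum => i _; apply: ler_sum => s _; apply: ler_sum => l _.
  have h := ler_wpM2l (neg_ge0 A s l)
    (lnbound (mulr_gt0 (pV i s) (pV i l)) (mulr_gt0 (pV' i s) (pV' i l))).
  move: h; rewrite (symE _ _ (neg_sym sym)); lra.
Qed.

Lemma Jterm_eq (A : 'M[R]_k) (B : 'M[R]_(n,k)) V : A^T = A -> posmx V ->
  Jterm A B V V = -2 * \tr (V^T *m pospart B) + 2 * \tr (V^T *m negpart B)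
  + \tr (V *m pospart A *m V^T) - \tr (V *m negpart A *m V^T).
Proof.
move=> sym pV; rewrite /Jterm !tr1 !tr2.
have d i s : V i s / V i s = 1 by apply: divff; exact: lt0r_neq0.
congr (_ + _ + _ - _).
- congr (_ * _); apply: eq_bigr => i _; apply: eq_bigr => s _.
  by rewrite d ln1 addr0 mulr1 mulrC.
- rewrite mulr_sumr; apply: eq_bigr => i _; rewrite mulr_sumr; apply: eq_bigr => s _.
  field; exact: lt0r_neq0.
- apply: eq_bigr => i _; apply: eq_bigr => s _.
  rewrite [(V *m _) i s]mxE mulr_suml mulr_suml; apply: eq_bigr => l _.
  field; exact: lt0r_neq0.
- apply: eq_bigr => i _; apply: eq_bigr => s _; apply: eq_bigr => l _.
  rewrite divff ?ln1 ?addr0 ?mulr1; last first.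
    by apply: lt0r_neq0; apply: mulr_gt0.
  rewrite (symE _ _ (neg_sym sym)); ring.
Qed.

Lemma Jgraph_ge (W : 'M[R]_n) V V' : nonnegmx W -> posmx V -> posmx V' ->
  \tr (V^T *m degmx W *m V) - \tr (V^T *m W *m V) <= Jgraph W V V'.
Proof.
move=> W0 pV pV'; rewrite /Jgraph tr4 tr3.
apply: lerB.
- rewrite le_eqVlt; apply/orP; left; apply/eqP; apply: eq_bigr => i _; apply: eq_bigr => s _.
  rewrite degmxE; field; exact: lt0r_neq0.
- apply: ler_sum => j _; apply: ler_sum => l _; apply: ler_sum => s _.
  have h := ler_wpM2l (W0 j l)
    (lnbound (mulr_gt0 (pV j s) (pV l s)) (mulr_gt0 (pV' j s) (pV' l s))).
  move: h; lra.
Qed.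

Lemma Jgraph_eq (W : 'M[R]_n) V : posmx V ->
  Jgraph W V V = \tr (V^T *m degmx W *m V) - \tr (V^T *m W *m V).
Proof.
move=> pV; rewrite /Jgraph tr4 tr3.
congr (_ - _).
- apply: eq_bigr => i _; apply: eq_bigr => s _.
  rewrite degmxE; field; exact: lt0r_neq0.
- apply: eq_bigr => j _; apply: eq_bigr => l _; apply: eq_bigr => s _.
  rewrite divff ?ln1 ?addr0 ?mulr1; last first.
    by apply: lt0r_neq0; apply: mulr_gt0.
  ring.
Qed.
End M.
Section D.
Variable R : realType.
Variables n k : nat.
Implicit Types V U : 'M[R]_(n, k).

Lemma comb4 (a b c d a' b' c' d' : R) :
  (-2*a + b + c - d) - (-2*a' + b' + c' - d') = -2*(a - a') + (b - b') + (c - c') - (d - d').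
Proof. ring. Qed.
Lemma sum2B m p (F G : 'I_m -> 'I_p -> R) :
  \sum_(i < m) \sum_(s < p) F i s - \sum_(i < m) \sum_(s < p) G i s
  = \sum_(i < m) \sum_(s < p) (F i s - G i s).
Proof. rewrite -sumrB; apply: eq_bigr => i _; by rewrite -sumrB. Qed.
Lemma sum3B m p q (F G : 'I_m -> 'I_p -> 'I_q -> R) :
  \sum_(i < m) \sum_(s < p) \sum_(l < q) F i s l - \sum_(i < m) \sum_(s < p) \sum_(l < q) G i s l
  = \sum_(i < m) \sum_(s < p) \sum_(l < q) (F i s l - G i s l).
Proof. rewrite sum2B; apply: eq_bigr => i _; apply: eq_bigr => s _; by rewrite -sumrB. Qed.
Lemma lin4 (X Y Z Q : 'I_n -> 'I_k -> R) :
  -2 * (\sum_(i < n) \sum_(s < k) X i s) + \sum_(i < n) \sum_(s < k) Y i s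
  + \sum_(i < n) \sum_(s < k) Z i s - \sum_(i < n) (2 * \sum_(s < k) Q i s)
  = \sum_(i < n) \sum_(s < k) (-2 * X i s + Y i s + Z i s - 2 * Q i s).
Proof.
rewrite mulr_sumr -!big_split -sumrB /=; apply: eq_bigr => i _.
rewrite mulr_sumr mulr_sumr -!big_split -sumrB /=; apply: eq_bigr => s _.
by [].
Qed.

Lemma Jterm_diff (A : 'M[R]_k) (B : 'M[R]_(n,k)) V U V' : A^T = A ->
  posmx V -> posmx U -> posmx V' ->
  Jterm A B V V' - Jterm A B U V' =
  \sum_(i < n) \sum_(s < k)
    ((negpart B i s + (V' *m pospart A) i s) / V' i s * (V i s ^+ 2 - U i s ^+ 2)
     - 2 * V' i s * (pospart B i s + (V' *m negpart A) i s) * (ln (V i s) - ln (U i s))).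
Proof.
move=> sym pV pU pV'.
rewrite /Jterm comb4 sum3B !sum2B.
rewrite [X in _ - X](eq_bigr (fun i => 2 * \sum_(s < k) V' i s *
    (\sum_(l < k) V' i l * negpart A l s) * (ln (V i s) - ln (U i s)))); last first.
  move=> i _; rewrite -(@symsum R k (negpart A) (fun s => V' i s)
     (fun s => ln (V i s) - ln (U i s)) (neg_sym sym)).
  apply: eq_bigr => s _; apply: eq_bigr => l _.
  have h1 := pV i s; have h2 := pV i l; have h3 := pU i s; have h4 := pU i l.
  have h5 := pV' i s; have h6 := pV' i l.
  have h7 : 0 < V i s * V i l by apply: mulr_gt0.
  have h8 : 0 < U i s * U i l by apply: mulr_gt0.
  have h9 : 0 < V' i s * V' i l by apply: mulr_gt0.
  rewrite !ln_div ?lnM ?posrE //; ring.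
rewrite lin4; apply: eq_bigr => i _; apply: eq_bigr => s _.
have h1 := pV i s; have h3 := pU i s; have h5 := pV' i s.
rewrite !ln_div ?posrE // !mxE.
field; exact: lt0r_neq0.
Qed.

Lemma lin2 (X Y : 'I_n -> 'I_k -> R) :
  \sum_(i < n) \sum_(s < k) X i s - \sum_(j < n) (2 * \sum_(s < k) Y j s)
  = \sum_(i < n) \sum_(s < k) (X i s - 2 * Y i s).
Proof.
rewrite -sumrB; apply: eq_bigr => i _; by rewrite mulr_sumr -sumrB.
Qed.

Lemma Jgraph_diff (W : 'M[R]_n) V U V' : W^T = W ->
  posmx V -> posmx U -> posmx V' ->
  Jgraph W V V' - Jgraph W U V' =
  \sum_(i < n) \sum_(s < k)
    ((degmx W *m V') i s / V' i s * (V i s ^+ 2 - U i s ^+ 2)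
     - 2 * V' i s * (W *m V') i s * (ln (V i s) - ln (U i s))).
Proof.
move=> sym pV pU pV'.
rewrite /Jgraph (_ : forall a b c d : R, (a - b) - (c - d) = (a - c) - (b - d)); last by move=> *; ring.
rewrite sum3B sum2B.
rewrite [X in _ - X](_ : _ = \sum_(j < n) (2 * \sum_(s < k) V' j s *
    (\sum_(l < n) V' l s * W l j) * (ln (V j s) - ln (U j s)))); last first.
  transitivity (\sum_(s < k) \sum_(j < n) \sum_(l < n)
     W j l * V' j s * V' l s * ((ln (V j s) - ln (U j s)) + (ln (V l s) - ln (U l s)))).
    under eq_bigr => j _ do rewrite exchange_big /=.
    rewrite exchange_big /=; apply: eq_bigr => s _; apply: eq_bigr => j _; apply: eq_bigr => l _.
    have h1 := pV j s; have h2 := pV l s; have h3 := pU j s; have h4 := pU l s.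
    have h5 := pV' j s; have h6 := pV' l s.
    have h7 : 0 < V j s * V l s by apply: mulr_gt0.
    have h8 : 0 < U j s * U l s by apply: mulr_gt0.
    have h9 : 0 < V' j s * V' l s by apply: mulr_gt0.
    rewrite !ln_div ?lnM ?posrE //; ring.
  transitivity (\sum_(s < k) 2 * \sum_(j < n) V' j s *
    (\sum_(l < n) V' l s * W l j) * (ln (V j s) - ln (U j s))).
    apply: eq_bigr => s _.
    exact: (@symsum R n W (fun j => V' j s) (fun j => ln (V j s) - ln (U j s)) sym).
  by rewrite -mulr_sumr exchange_big /= mulr_sumr.
rewrite lin2; apply: eq_bigr => i _; apply: eq_bigr => s _.
have ew : (W *m V') i s = \sum_(l < n) V' l s * W l i.
  by rewrite mxE; apply: eq_bigr => l _; rewrite (symE _ _ sym) mulrC.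
rewrite ew; field; exact: lt0r_neq0.
Qed.
End D.
Section Main.
Variable R : realType.
Variables n k : nat.
Implicit Types V U : 'M[R]_(n, k).

Definition Del1 (lam2 : R) (A1 A2 : 'M[R]_k) (B1 B2 : 'M[R]_(n, k)) (WP WQ : 'M[R]_n) V' :=
  pospart B1 + pospart B2 + V' *m (negpart A1 + negpart A2) + lam2 *: ((WP + WQ) *m V').
Definition Del2 (lam2 : R) (A1 A2 : 'M[R]_k) (B1 B2 : 'M[R]_(n, k)) (WP WQ : 'M[R]_n) V' :=
  negpart B1 + negpart B2 + V' *m (pospart A1 + pospart A2) + lam2 *: ((degmx WP + degmx WQ) *m V').

Lemma lin3 (X Y P Q : 'I_n -> 'I_k -> R) (c : R) :
  \sum_(i < n) \sum_(s < k) X i s + \sum_(i < n) \sum_(s < k) Y i s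
  + c * (\sum_(i < n) \sum_(s < k) P i s + \sum_(i < n) \sum_(s < k) Q i s)
  = \sum_(i < n) \sum_(s < k) (X i s + Y i s + c * (P i s + Q i s)).
Proof.
rewrite -!big_split mulr_sumr -big_split /=; apply: eq_bigr => i _.
by rewrite -!big_split mulr_sumr -big_split /=.
Qed.

Lemma Jaux_diff lam2 A1 A2 B1 B2 WP WQ V U V' :
  A1^T = A1 -> A2^T = A2 -> WP^T = WP -> WQ^T = WQ ->
  posmx V -> posmx U -> posmx V' ->
  Jaux lam2 A1 A2 B1 B2 WP WQ V V' - Jaux lam2 A1 A2 B1 B2 WP WQ U V' =
  \sum_(i < n) \sum_(s < k)
    (Del2 lam2 A1 A2 B1 B2 WP WQ V' i s / V' i s * (V i s ^+ 2 - U i s ^+ 2)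
     - 2 * V' i s * Del1 lam2 A1 A2 B1 B2 WP WQ V' i s * (ln (V i s) - ln (U i s))).
Proof.
move=> s1 s2 s3 s4 pV pU pV'.
rewrite /Jaux (_ : forall a b c d a' b' c' d' : R,
  a + b + lam2 * (c + d) - (a' + b' + lam2 * (c' + d'))
  = (a - a') + (b - b') + lam2 * ((c - c') + (d - d'))); last by move=> *; ring.
rewrite !Jterm_diff // !Jgraph_diff // lin3; apply: eq_bigr => i _; apply: eq_bigr => s _.
rewrite /Del1 /Del2 !mulmxDr !mulmxDl !mxE.
field; exact: lt0r_neq0.
Qed.

Lemma Del_ge0 lam2 A1 A2 B1 B2 WP WQ V' i s : 0 <= lam2 -> nonnegmx WP -> nonnegmx WQ ->
  posmx V' ->
  0 <= Del1 lam2 A1 A2 B1 B2 WP WQ V' i s /\ 0 <= Del2 lam2 A1 A2 B1 B2 WP WQ V' i s.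
Proof.
move=> l0 nP nQ pV'.
have v0 j t : 0 <= V' j t by exact: ltW.
have p0 m p (M : 'M[R]_(m, p)) a b : 0 <= (`|M a b| + M a b) / 2.
  by have := pos_ge0 M a b; rewrite mxE.
have n0 m p (M : 'M[R]_(m, p)) a b : 0 <= (`|M a b| - M a b) / 2.
  by have := neg_ge0 M a b; rewrite mxE.
rewrite /Del1 /Del2 !mxE; split.
  apply: addr_ge0; [apply: addr_ge0; [apply: addr_ge0|] | apply: mulr_ge0 => //] => //.
  - apply: sumr_ge0 => l _; rewrite !mxE; apply: mulr_ge0 => //.
    by apply: addr_ge0.
  - apply: sumr_ge0 => l _; rewrite !mxE; apply: mulr_ge0 => //.
    exact: addr_ge0.
apply: addr_ge0; [apply: addr_ge0; [apply: addr_ge0|] | apply: mulr_ge0 => //] => //.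
- apply: sumr_ge0 => l _; rewrite !mxE; apply: mulr_ge0 => //.
  by apply: addr_ge0.
- apply: sumr_ge0 => l _; rewrite /degmx !mxE; apply: mulr_ge0 => //.
  apply: addr_ge0; apply: mulr_ge0 => //; apply: sumr_ge0 => *; by [].
Qed.

Lemma conv_entry (a b c x y t : R) : 0 <= a -> 0 <= b -> 0 < x -> 0 < y -> 0 <= t <= 1 ->
  b * ((t * x + (1 - t) * y) ^+ 2 - c ^+ 2) - a * (ln (t * x + (1 - t) * y) - ln c)
  <= t * (b * (x ^+ 2 - c ^+ 2) - a * (ln x - ln c))
     + (1 - t) * (b * (y ^+ 2 - c ^+ 2) - a * (ln y - ln c)).
Proof.
move=> a0 b0 x0 y0 ht.
have h1 := ler_wpM2l b0 (sq_convex x y ht).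
have h2 := ler_wpM2l a0 (ln_concave x0 y0 ht).
have e : t * (b * (x ^+ 2 - c ^+ 2) - a * (ln x - ln c))
     + (1 - t) * (b * (y ^+ 2 - c ^+ 2) - a * (ln y - ln c))
   - (b * ((t * x + (1 - t) * y) ^+ 2 - c ^+ 2) - a * (ln (t * x + (1 - t) * y) - ln c))
   = b * (t * x ^+ 2 + (1 - t) * y ^+ 2) - b * ((t * x + (1 - t) * y) ^+ 2)
     + (a * ln (t * x + (1 - t) * y) - a * (t * ln x + (1 - t) * ln y)) by ring.
have : 0 <= b * (t * x ^+ 2 + (1 - t) * y ^+ 2) - b * ((t * x + (1 - t) * y) ^+ 2)
     + (a * ln (t * x + (1 - t) * y) - a * (t * ln x + (1 - t) * ln y)).
  apply: addr_ge0; rewrite subr_ge0 //.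
lra.
Qed.
End Main.
Theorem mainTheorem2 (R : realType) (n k : nat) (lam2 : R)
  (A1 A2 : 'M[R]_k) (B1 B2 : 'M[R]_(n, k)) (WP WQ : 'M[R]_n) :
  0 <= lam2 -> symmx A1 -> symmx A2 ->
  symmx WP -> symmx WQ -> nonnegmx WP -> nonnegmx WQ ->
  let F := Fobj lam2 A1 A2 B1 B2 WP WQ in
  let J := Jaux lam2 A1 A2 B1 B2 WP WQ in
  (* (i) J is an auxiliary function for F *)
  (forall V V' : 'M[R]_(n, k), posmx V -> posmx V' ->
     F V <= J V V' /\ J V V = F V) /\
  (* (ii) J(., V') is convex on the open positive orthant *)
  (forall V' : 'M[R]_(n, k), posmx V' ->
     forall (V1 V2 : 'M[R]_(n, k)) (t : R), posmx V1 -> posmx V2 ->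
     0 <= t <= 1 ->
     J (t *: V1 + (1 - t) *: V2) V' <= t * J V1 V' + (1 - t) * J V2 V') /\
  (* (iii) closed-form global minimizer *)
  (forall V' : 'M[R]_(n, k), posmx V' ->
     let Delta1 := pospart B1 + pospart B2 + V' *m (negpart A1 + negpart A2)
                   + lam2 *: ((WP + WQ) *m V') in
     let Delta2 := negpart B1 + negpart B2 + V' *m (pospart A1 + pospart A2)
                   + lam2 *: ((degmx WP + degmx WQ) *m V') in
     posmx Delta1 -> posmx Delta2 ->
     let Vstar := \matrix_(i, j) (V' i j * Num.sqrt (Delta1 i j / Delta2 i j)) in
     posmx Vstar /\
     (forall V : 'M[R]_(n, k), posmx V -> J Vstar V' <= J V V') /\
     (forall V : 'M[R]_(n, k), posmx V -> J V V' <= J Vstar V' -> V = Vstar)).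
Proof.
move=> l0 sA1 sA2 sP sQ nP nQ F J.
split; [|split].
- move=> V V' pV pV'; rewrite /F /J /Fobj /Jaux; split.
    have h1 := Jterm_ge B1 sA1 pV pV'.
    have h2 := Jterm_ge B2 sA2 pV pV'.
    have h3 := Jgraph_ge nP pV pV'.
    have h4 := Jgraph_ge nQ pV pV'.
    have h34 := ler_wpM2l l0 (lerD h3 h4).
    lra.
  rewrite !Jterm_eq // !Jgraph_eq //; ring.
- move=> V' pV' V1 V2 t p1 p2 ht.
  set W := t *: V1 + (1 - t) *: V2.
  have eW i s : W i s = t * V1 i s + (1 - t) * V2 i s by rewrite !mxE.
  have pW : posmx W.
    move=> i s; rewrite eW; move/andP: ht => [t0 t1].
    case: (ltrP t 1) => ht1.
      have : 0 < (1 - t) * V2 i s by apply: mulr_gt0 => //; lra.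
      have : 0 <= t * V1 i s by apply: mulr_ge0 => //; exact: ltW.
      lra.
    have -> : t = 1 by lra.
    by rewrite mul1r subrr mul0r addr0.
  have e1 := Jaux_diff lam2 B1 B2 sA1 sA2 sP sQ pW pV' pV'.
  have e2 := Jaux_diff lam2 B1 B2 sA1 sA2 sP sQ p1 pV' pV'.
  have e3 := Jaux_diff lam2 B1 B2 sA1 sA2 sP sQ p2 pV' pV'.
  rewrite /J.
  set G := fun X : 'M[R]_(n, k) => \sum_(i < n) \sum_(s < k)
    (Del2 lam2 A1 A2 B1 B2 WP WQ V' i s / V' i s * (X i s ^+ 2 - V' i s ^+ 2)
     - 2 * V' i s * Del1 lam2 A1 A2 B1 B2 WP WQ V' i s * (ln (X i s) - ln (V' i s))).
  have hG : G W <= t * G V1 + (1 - t) * G V2.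
    rewrite /G !mulr_sumr -big_split; apply: ler_sum => i _.
    rewrite !mulr_sumr -big_split; apply: ler_sum => s _.
    have [d1 d2] := Del_ge0 A1 A2 B1 B2 i s l0 nP nQ pV'.
    have ha : 0 <= 2 * V' i s * Del1 lam2 A1 A2 B1 B2 WP WQ V' i s.
      by apply: mulr_ge0 => //; apply: mulr_ge0 => //; exact: ltW.
    have hb : 0 <= Del2 lam2 A1 A2 B1 B2 WP WQ V' i s / V' i s.
      by apply: divr_ge0 => //; exact: ltW.
    have := @conv_entry R _ _ (V' i s) (V1 i s) (V2 i s) t ha hb (p1 i s) (p2 i s) ht.
    by rewrite eW; apply.
  move: hG; rewrite /G -e1 -e2 -e3; lra.
- move=> V' pV' D1 D2 pD1 pD2 Vs.
  have eVs i s : Vs i s = V' i s * Num.sqrt (D1 i s / D2 i s) by rewrite mxE.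
  have pVs : posmx Vs.
    move=> i s; rewrite eVs; apply: mulr_gt0 => //.
    by rewrite sqrtr_gt0; apply: divr_gt0.
  have key V : posmx V -> \sum_(i < n) \sum_(s < k)
      D2 i s / V' i s * (V i s - Vs i s) ^+ 2 <= J V V' - J Vs V'.
    move=> pV; rewrite /J (Jaux_diff lam2 B1 B2 sA1 sA2 sP sQ pV pVs pV').
    apply: ler_sum => i _; apply: ler_sum => s _.
    have b0 : 0 <= D2 i s / V' i s by apply: divr_ge0; apply: ltW.
    have e : 2 * V' i s * Del1 lam2 A1 A2 B1 B2 WP WQ V' i s
       = 2 * (D2 i s / V' i s * Vs i s ^+ 2).
      rewrite eVs exprMn sqr_sqrtr; last by apply: divr_ge0; apply: ltW.
      rewrite /Del1 -/D1; field.
      by apply/andP; split; apply: lt0r_neq0.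
    rewrite e; exact: entry_min.
  have nn V i s : 0 <= D2 i s / V' i s * (V i s - Vs i s) ^+ 2.
    by apply: mulr_ge0; [apply: divr_ge0; apply: ltW | exact: sqr_ge0].
  split => //; split.
    move=> V pV; have := key V pV.
    have : 0 <= \sum_(i < n) \sum_(s < k) D2 i s / V' i s * (V i s - Vs i s) ^+ 2.
      by apply: sumr_ge0 => i _; apply: sumr_ge0 => s _.
    lra.
  move=> V pV hle; have := key V pV.
  have h0 : 0 <= \sum_(i < n) \sum_(s < k) D2 i s / V' i s * (V i s - Vs i s) ^+ 2.
    by apply: sumr_ge0 => i _; apply: sumr_ge0 => s _.
  move=> hk.
  have z : \sum_(i < n) \sum_(s < k) D2 i s / V' i s * (V i s - Vs i s) ^+ 2 = 0 by lra.
  apply/matrixP => i s.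
  have zi : \sum_(s < k) D2 i s / V' i s * (V i s - Vs i s) ^+ 2 = 0.
    apply: (psumr_eq0P _ z) => // j _; apply: sumr_ge0 => t _; exact: nn.
  have zs : D2 i s / V' i s * (V i s - Vs i s) ^+ 2 = 0.
    apply: (psumr_eq0P _ zi) => // t _; exact: nn.
  move/eqP: zs; rewrite mulf_eq0 sqrf_eq0 subr_eq0 => /orP[|/eqP //].
  rewrite mulf_eq0 invr_eq0 => /orP[] /eqP h.
    by have := pD2 i s; rewrite h ltxx.
  by have := pV' i s; rewrite h ltxx.
Qed.
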